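(* For all integers $k\ge n\ge1$, the transition matrix $\bar K$ of the Burnside process on $\Pi_n$ satisfies $$\bar K(x,y)\ge\frac{1}{(n+1)^{n-1}}\quad\text{for all }x,y\in\Pi_n.$$
   Context: $S_k$ acts on $[k]^n$ by $\sigma(u_1,\dots,u_n)=(\sigma(u_1),\dots,\sigma(u_n))$. The Burnside process on $[k]^n$: from $u$, choose $\sigma$ uniformly among permutations of $[k]$ fixing every value appearing in $u$, then choose each coordinate of the new state independently and uniformly among the fixed points of $\sigma$. $\Pi_n$ is the set of set partitions of $[n]$; the partition of $u$ puts $i,j$ in the same block iff $u_i=u_j$, and the orbits of the action are the sets of vectors with a given partition. The Burnside process on $\Pi_n$ is the lumped chain: $\bar K(x,y)$ is the probability that one step of the Burnside process on $[k]^n$ started from any $u$ with partition $x$ lands on a vector with partition $y$. *)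

(* Defs.v *)
From mathcomp Require Import all_boot all_order all_algebra all_fingroup.
Set Implicit Arguments. Unset Strict Implicit. Unset Printing Implicit Defensive.
Import GRing.Theory Num.Theory.
Local Open Scope ring_scope.

(* States of the Burnside process on [k]^n : vectors u : 'I_n -> 'I_k. *)
Definition vec (n k : nat) := {ffun 'I_n -> 'I_k}.

Definition stab (n k : nat) (u : vec n k) : {set {perm 'I_k}} :=
  [set s : {perm 'I_k} | [forall i : 'I_n, s (u i) == u i]].

Definition nfix (k : nat) (s : {perm 'I_k}) : nat := #|[set a : 'I_k | s a == a]|.

(* One-step transition probability of the Burnside process on [k]^n:
   pick s uniformly in stab u, then each coordinate uniformly in Fix(s);
   v is reachable from s iff all its values are fixed by s, with
   probability 1 / nfix(s)^n. *)
Definition BK (n k : nat) (u v : vec n k) : rat :=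
  \sum_(s in stab u | [forall i : 'I_n, s (v i) == v i])
     ((#|stab u|%:R)^-1 * (((nfix s) ^ n)%N%:R)^-1).

Definition vpart (n k : nat) (u : vec n k) : {set {set 'I_n}} :=
  preim_partition u [set: 'I_n].

(* Lumped kernel started from u (with partition x = vpart u) to partition y. *)
Definition BKbar_from (n k : nat) (u : vec n k) (y : {set {set 'I_n}}) : rat :=
  \sum_(v : vec n k | vpart v == y) BK u v.

(* Main.v *)
Require Import Defs.
From mathcomp Require Import all_boot all_order all_algebra all_fingroup primitive_action.
From mathcomp Require Import zify ring lra.
Set Implicit Arguments. Unset Strict Implicit. Unset Printing Implicit Defensive.
Import GRing.Theory Num.Theory.

Section Grp.
Variables (n k : nat) (u : vec n k).

Lemma stab_group_set : group_set (stab u).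
Proof.
apply/group_setP; split.
  by rewrite inE; apply/forallP => i; rewrite perm1.
move=> s t; rewrite !inE => /forallP Hs /forallP Ht; apply/forallP => i.
by rewrite permM (eqP (Hs i)) (eqP (Ht i)).
Qed.

Canonical stab_group := Group stab_group_set.

Definition Aset : {set 'I_k} := [set u i | i : 'I_n].

Lemma stab_fixA s a : s \in stab u -> a \in Aset -> s a = a.
Proof. by rewrite inE => /forallP Hs /imsetP[i _ ->]; apply/eqP. Qed.

Lemma stab_memA s x : s \in stab u -> (s x \in Aset) = (x \in Aset).
Proof.
move=> Hs; apply/idP/idP => [H|H]; last by rewrite stab_fixA.
have E : s (s x) = s x := stab_fixA Hs H.
by rewrite -(perm_inj E).
Qed.
End Grp.

Section Comb.
Variables (n k : nat) (u : vec n k) (j : nat).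
Local Notation G := (stab_group u).
Local Notation A := (Aset u).
Definition Tset : {set j.-tuple 'I_k} := j.-dtuple(~: A).
Definition Tfix (s : {perm 'I_k}) := ('Fix_(Tset | ('P * j)%act)[s])%g.

Lemma Tfix_mem s t : (t \in Tfix s) = (t \in Tset) && [forall i, s (tnth t i) == tnth t i].
Proof.
rewrite /Tfix in_setI; congr (_ && _); apply/afix1P/forallP => [E i|E].
  by rewrite -{2}E /= tnth_map.
by apply: eq_from_tnth => i /=; rewrite tnth_map; apply/eqP; exact: E.
Qed.

Lemma acts_T : [acts G, on Tset | ('P * j)%act].
Proof.
apply/actsP => s Gs t /=; rewrite !inE /=.
rewrite map_inj_uniq; last by apply: perm_inj.
congr andb; apply/subsetP/subsetP => H x Hx.
  have := H (s x); rewrite map_f // => /(_ isT); rewrite !inE stab_memA //.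
by case/mapP: Hx => z Hz ->; have := H z Hz; rewrite !inE stab_memA.
Qed.

Lemma F2 : j <= #|~: A| -> #|G| <= \sum_(s in G) #|Tfix s|.
Proof.
move=> hj; rewrite (Frobenius_Cauchy acts_T) leq_pmull // card_gt0.
apply/set0Pn.
have Hs : size (take j (enum (~: A))) == j by rewrite size_takel // -cardE.
exists (orbit ('P * j)%act G (Tuple Hs)); apply: imset_f.
rewrite inE /= take_uniq ?enum_uniq //=; apply/subsetP => x /mem_take.
by rewrite mem_enum.
Qed.

Definition St (t : j.-tuple 'I_k) : {set 'I_k} := ~: A :\: [set x in t].

Lemma memH t s : t \in Tset ->
  (s \in ('C_G[t | ('P * j)%act])%G) = (s \in G) && (t \in Tfix s).
Proof.
move=> Tt; rewrite in_setI Tfix_mem Tt /=; congr (_ && _).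
apply/astab1P/forallP => [E i|E].
  by rewrite -{2}E /= tnth_map.
by apply: eq_from_tnth => i /=; rewrite tnth_map; apply/eqP; exact: E.
Qed.

Lemma F3t t : t \in Tset ->
  \sum_(s in G | t \in Tfix s) #|[set c in St t | s c == c]| <=
  #|[set s in G | t \in Tfix s]|.
Proof.
move=> Tt.
set H := ('C_G[t | ('P * j)%act])%G.
have actsH : [acts H, on St t | 'P].
  apply/actsP => s; rewrite memH // => /andP[Gs Fs] c /=.
  rewrite !inE stab_memA //; congr (_ && _).
  move: Fs; rewrite Tfix_mem => /andP[_ /forallP Fs].
  apply/idP/idP; apply: contra.
    case/tnthP => i ->; apply/tnthP; exists i; exact/eqP/(Fs i).
  case/tnthP => i Ei; apply/tnthP; exists i; apply: (@perm_inj _ s).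
  rewrite (eqP (Fs i)); exact: Ei.
have := Frobenius_Cauchy actsH.
have -> : \sum_(a in H) #|('Fix_(St t | 'P)[a])%g| =
   \sum_(s in G | t \in Tfix s) #|[set c in St t | s c == c]|.
  apply: eq_big => s; first by rewrite memH.
  move=> _; apply: eq_card => c; rewrite !inE.
  by rewrite sub1set inE.
move=> ->.
have -> : #|[set s in G | t \in Tfix s]| = #|H|.
  by apply: eq_card => s; rewrite memH // inE.
suff Ho : #|[set orbit 'P H x | x in St t]| <= 1.
  by rewrite -{2}(mul1n #|H|) leq_mul2r Ho orbT.
rewrite (leq_trans (subset_leq_card (_ : _ \subset [set St t]))) ?cards1 //.
apply/subsetP => O /imsetP[c Sc ->]; rewrite inE; apply/eqP/setP => c'.
apply/idP/idP => [/imsetP[s Hs ->]|Sc'].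
  by move/actsP: actsH => /(_ s Hs c) /= ->.
apply/imsetP; exists (tperm c c'); last by rewrite /= /aperm tpermL.
have /andP[tc Ac] : (c \notin t) && (c \notin A) by move: Sc; rewrite !inE.
have /andP[tc' Ac'] : (c' \notin t) && (c' \notin A) by move: Sc'; rewrite !inE.
rewrite /H memH //; apply/andP; split.
  rewrite inE; apply/forallP => i; rewrite tpermD //.
    by apply: contra Ac => /eqP ->; apply: imset_f.
  by apply: contra Ac' => /eqP ->; apply: imset_f.
rewrite Tfix_mem Tt; apply/forallP => i; rewrite tpermD //.
  by apply: contra tc => /eqP ->; apply: mem_tnth.
by apply: contra tc' => /eqP ->; apply: mem_tnth.
Qed.

Lemma cardU_le (T : finType) (X Y : {set T}) : #|X :|: Y| <= #|X| + #|Y|.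
Proof. by rewrite cardsU leq_subr. Qed.

Lemma nfix_le s t : s \in G -> t \in Tfix s ->
  nfix s <= #|A| + j + #|[set c in St t | s c == c]|.
Proof.
move=> Gs Ft; rewrite /nfix.
have sub : [set a | s a == a] \subset A :|: [set x in t] :|: [set c in St t | s c == c].
  apply/subsetP => a; rewrite !inE => fa; rewrite fa andbT.
  by case: (a \in A); case: (a \in t).
apply: (leq_trans (subset_leq_card sub)).
apply: (leq_trans (cardU_le _ _)); rewrite leq_add2r.
apply: (leq_trans (cardU_le _ _)); rewrite leq_add2l.
by rewrite cardsE; apply: (leq_trans (card_size _)); rewrite size_tuple.
Qed.

Lemma F3 : \sum_(s in G) #|Tfix s| * nfix s <=
  (#|A| + j + 1) * \sum_(s in G) #|Tfix s|.
Proof.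
have E1 : \sum_(s in G) #|Tfix s| * nfix s = \sum_(s in G) \sum_(t in Tfix s) nfix s.
  by apply: eq_bigr => s _; rewrite sum_nat_const.
rewrite E1.
apply: (@leq_trans (\sum_(s in G) \sum_(t in Tfix s)
   ((#|A| + j) + #|[set c in St t | s c == c]|))).
  apply: leq_sum => s Gs; apply: leq_sum => t Ft; exact: nfix_le.
rewrite mulnDl mul1n big_distrr /=.
have E2 : \sum_(s in G) \sum_(t in Tfix s) (#|A| + j + #|[set c in St t | s c == c]|)
  = \sum_(s in G) (#|A| + j) * #|Tfix s| +
    \sum_(s in G) \sum_(t in Tfix s) #|[set c in St t | s c == c]|.
  rewrite -big_split /=; apply: eq_bigr => s _.
  by rewrite big_split /= sum_nat_const mulnC.
rewrite E2 leq_add2l.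
rewrite (exchange_big_dep (mem Tset)) /=; last first.
  by move=> s t _; rewrite /Tfix in_setI => /andP[].
apply: (@leq_trans (\sum_(t in Tset) #|[set s in G | t \in Tfix s]|)).
  by apply: leq_sum => t Tt; apply: F3t.
apply: eq_leq.
have -> : \sum_(s in G) #|Tfix s| = \sum_(s in G) \sum_(t in Tfix s) 1.
  by apply: eq_bigr => s _; rewrite sum1_card.
rewrite (exchange_big_dep (mem Tset)) /=; last first.
  by move=> s t _; rewrite /Tfix in_setI => /andP[].
apply: eq_bigr => t _; rewrite sum1_card; apply: eq_card => s; by rewrite inE.
Qed.
End Comb.

Lemma preim_eq (T : finType) (R1 R2 : eqType) (f : T -> R1) (g : T -> R2) (D : {set T}) :
  (forall i i', (f i == f i') = (g i == g i')) ->
  preim_partition f D = preim_partition g D.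
Proof.
move=> H; rewrite /preim_partition /equivalence_partition.
by apply: eq_imset => x; apply/setP => z; rewrite !inE H.
Qed.

Section Inj.
Variables (n k : nat) (hn : (0 < n)%N) (u : vec n k) (y : {set {set 'I_n}}).
Hypothesis hy : partition y [set: 'I_n].
Local Notation G := (stab_group u).
Local Notation A := (Aset u).
Local Notation m := #|y|.
Local Notation j := (#|y| - #|Aset u|).
Definition c0 : 'I_k := u (Ordinal hn).
Definition pp := m.-1 - j.
Definition Pl := take pp (enum (A :\ c0)).
Definition vals (t : j.-tuple 'I_k) := c0 :: Pl ++ val t.
Definition lab (i : 'I_n) := index (pblock y i) (enum y).
Definition vt (t : j.-tuple 'I_k) : vec n k := [ffun i => nth c0 (vals t) (lab i)].
Definition phi (ct : 'I_k * j.-tuple 'I_k) : vec n k :=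
  [ffun i => tperm c0 ct.1 (vt ct.2 i)].

Lemma c0A : c0 \in A.
Proof. exact: imset_f. Qed.

Lemma coverY : cover y = [set: 'I_n].
Proof. by case/and3P: hy => /eqP. Qed.

Lemma pblockY i : pblock y i \in y.
Proof. by apply: pblock_mem; rewrite coverY. Qed.

Lemma lab_lt i : (lab i < m)%N.
Proof. by rewrite /lab cardE index_mem mem_enum pblockY. Qed.

Lemma lab_eq i i' : (lab i == lab i') = (pblock y i == pblock y i').
Proof.
rewrite /lab; apply/eqP/eqP => [E|->] //.
by apply: (@index_inj _ set0 (enum y)); rewrite ?mem_enum ?pblockY.
Qed.

Lemma rep l : (l < m)%N -> exists i, lab i = l.
Proof.
move=> lm.
have lm' : (l < size (enum y))%N by rewrite -cardE.
have By : nth set0 (enum y) l \in y by rewrite -mem_enum mem_nth.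
have /set0Pn[i Bi] : nth set0 (enum y) l != set0 := partition_neq0 hy By.
exists i; rewrite /lab (def_pblock (partition_trivIset hy) By Bi).
by rewrite index_uniq ?enum_uniq.
Qed.

Lemma m_gt0 : (0 < m)%N.
Proof. exact: leq_ltn_trans (leq0n _) (lab_lt (Ordinal hn)). Qed.

Lemma size_Pl : size Pl = pp.
Proof.
rewrite /Pl size_takel // -cardE.
have := cardsD1 c0 A; rewrite c0A add1n => E.
rewrite /pp -subn1 E; move: (#|y|) (#|A :\ c0|) => a b; clear; lia.
Qed.

Lemma size_vals t : size (vals t) = m.
Proof.
rewrite /= size_cat size_Pl size_tuple /pp -subn1.
have := m_gt0; have : (0 < #|A|)%N by apply/card_gt0P; exists c0; exact: c0A.
move: (#|y|) (#|A|) => a b h1 h2; clear -h1 h2; lia.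
Qed.

Lemma uniq_vals t : t \in Tset u j -> uniq (vals t).
Proof.
rewrite inE => /andP[ut tC].
rewrite /vals cons_uniq cat_uniq mem_cat negb_or ut andbT.
have PA x : x \in Pl -> x \in A :\ c0 by move/mem_take; rewrite mem_enum.
apply/and3P; split; first (apply/andP; split).
- by apply/negP => /PA; rewrite !inE eqxx.
- apply/negP => c0t; have := subsetP tC _ c0t; by rewrite inE c0A.
- by rewrite take_uniq ?enum_uniq.
- apply/hasPn => x xt; apply/negP => /PA; rewrite !inE => /andP[_ xA].
  by have := subsetP tC _ xt; rewrite inE xA.
Qed.

Lemma vt_mem t i : vt t i \in vals t.
Proof. by rewrite ffunE mem_nth // size_vals lab_lt. Qed.

Lemma vt_eq t i i' : t \in Tset u j -> (vt t i == vt t i') = (pblock y i == pblock y i').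
Proof.
move=> Tt; rewrite !ffunE nth_uniq ?size_vals ?lab_lt ?uniq_vals //.
exact: lab_eq.
Qed.

Lemma vpart_phi c t : t \in Tset u j -> vpart (phi (c, t)) = y.
Proof.
move=> Tt; rewrite /vpart -[in RHS](preim_partition_pblock hy).
apply: preim_eq => i i'; have := vt_eq i i' Tt.
by rewrite !ffunE /= (inj_eq perm_inj).
Qed.

Lemma vals_fixed s t x : s \in G -> t \in Tfix u j s -> x \in vals t -> s x = x.
Proof.
move=> Gs; rewrite Tfix_mem => /andP[_ /forallP Ft]; rewrite inE => /orP[/eqP ->|].
  exact: stab_fixA Gs c0A.
rewrite mem_cat => /orP[/mem_take|/tnthP[i ->]].
  by rewrite mem_enum inE => /andP[_ xA]; exact: stab_fixA Gs xA.
exact/eqP/Ft.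
Qed.

Lemma phi_fixed s c t : s \in G -> t \in Tfix u j s -> s c = c ->
  [forall i, s (phi (c, t) i) == phi (c, t) i].
Proof.
move=> Gs Ft sc; apply/forallP => i; rewrite ffunE /=.
have sz := vals_fixed Gs Ft (vt_mem t i).
have s0 : s c0 = c0 := stab_fixA Gs c0A.
by case: tpermP => _; rewrite ?sc ?s0 ?sz.
Qed.

Lemma phi_inj c t c' t' : t \in Tset u j -> t' \in Tset u j ->
  phi (c, t) = phi (c', t') -> (c, t) = (c', t').
Proof.
move=> Tt Tt' E.
have [i0 Ei0] := rep m_gt0.
have v0 t1 : vt t1 i0 = c0 by rewrite ffunE Ei0.
have Ec : c = c'.
  by have := congr1 (fun f : vec n k => f i0) E; rewrite !ffunE /= Ei0 /= !tpermL.
subst c'.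
have Ev i : vt t i = vt t' i.
  apply: (@perm_inj _ (tperm c0 c)).
  by have := congr1 (fun f : vec n k => f i) E; rewrite !ffunE.
have Evals : vals t = vals t'.
  apply: (@eq_from_nth _ c0); first by rewrite !size_vals.
  move=> l; rewrite size_vals => /rep [i <-].
  by have := Ev i; rewrite !ffunE.
have Et : val t = val t'.
  have := congr1 (drop (size Pl).+1) Evals.
  by rewrite /= !drop_size_cat.
by congr pair; apply: val_inj.
Qed.

Lemma F1 s : s \in G ->
  nfix s * #|Tfix u j s| <=
  #|[set v : vec n k | (vpart v == y) && [forall i, s (v i) == v i]]|.
Proof.
move=> Gs; rewrite /nfix -cardsX.
have inj : {in setX [set a | s a == a] (Tfix u j s) &, injective phi}.
  move=> [c t] [c' t'] /setXP[_ Ft] /setXP[_ Ft'] E.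
  move: Ft Ft'; rewrite !Tfix_mem => /andP[Tt _] /andP[Tt' _].
  exact: phi_inj.
rewrite -(card_in_imset inj); apply: subset_leq_card.
apply/subsetP => v /imsetP[[c t] /setXP[/= sc Ft] ->].
move: sc; rewrite inE => /eqP sc; rewrite inE.
rewrite vpart_phi ?eqxx /=; last by move: Ft; rewrite Tfix_mem => /andP[].
exact: phi_fixed.
Qed.
End Inj.

Import Order.TTheory.
Local Open Scope ring_scope.
Lemma bern (R : realFieldType) (p : nat) (h : R) : -1 <= h -> 1 + p%:R * h <= (1 + h) ^+ p.
Proof.
move=> Hh; elim: p => [|p IH]; first by rewrite mul0r addr0 expr0.
rewrite exprS.
have H1 : 0 <= 1 + h by lra.
have := ler_wpM2l H1 IH.
have : 0 <= p%:R * h * h by rewrite -mulrA mulr_ge0 // -expr2 sqr_ge0.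
rewrite -natr1.
move=> A B; apply: le_trans B; nra.
Qed.

Lemma tangent (R : realFieldType) (p : nat) (x M : R) : 0 < x -> 0 < M ->
  (M ^+ p)^-1 * (p.+1%:R - p%:R * x / M) <= (x ^+ p)^-1.
Proof.
move=> Hx HM.
set r := M / x.
have Hr : 0 < r by rewrite divr_gt0.
have Hb : 1 + p%:R * (r - 1) <= r ^+ p.
  by move: (@bern R p (r - 1) ltac:(lra)); rewrite [1 + (r - 1)]addrC subrK.
have E : x / M = r^-1 by rewrite /r invf_div.
have Hri : r + r^-1 >= 2.
  have : 0 <= (r - 1) ^+ 2 / r by rewrite divr_ge0 ?sqr_ge0 ?ltW.
  have -> : (r - 1) ^+ 2 / r = r + r^-1 - 2.
    by field; rewrite gt_eqF.
  lra.
have H2 : p.+1%:R - p%:R * x / M <= r ^+ p.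
  rewrite -mulrA E; apply: le_trans Hb.
  have Hp : 0 <= p%:R :> R by [].
  rewrite -natr1; nra.
have -> : (x ^+ p)^-1 = (M ^+ p)^-1 * r ^+ p.
  by rewrite /r exprMn exprVn mulrA mulVf ?mul1r // expf_neq0 // gt_eqF.
by rewrite ler_wpM2l // invr_ge0 exprn_ge0 // ltW.
Qed.

Lemma final (I : finType) (G : {set I}) (w F B : I -> nat) (n M : nat) :
  (0 < #|G|)%N -> (0 < n)%N -> (0 < M)%N ->
  (forall s, s \in G -> 0 < F s)%N ->
  (forall s, s \in G -> F s * w s <= B s)%N ->
  (#|G| <= \sum_(s in G) w s)%N ->
  (\sum_(s in G) w s * F s <= M * \sum_(s in G) w s)%N ->
  (((M ^ (n - 1))%N%:R : rat)^-1 <=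
   \sum_(s in G) (B s)%:R * ((#|G|%:R)^-1 * (((F s ^ n)%N%:R))^-1)).
Proof.
move=> G0 n0 M0 F0 FB GW WF.
set p := (n - 1)%N.
have np : n = p.+1 by rewrite /p; lia.
set g : rat := (#|G|%:R)^-1.
set Mr : rat := M%:R.
have g0 : 0 < g by rewrite invr_gt0 ltr0n.
have Mr0 : 0 < Mr by rewrite ltr0n.
set Wr : rat := (\sum_(s in G) w s)%:R.
have step1 : \sum_(s in G) g * (w s)%:R * (Mr ^+ p)^-1 * (p.+1%:R - p%:R * (F s)%:R / Mr)
   <= \sum_(s in G) (B s)%:R * (g * ((F s ^ n)%N%:R)^-1).
  apply: ler_sum => s Gs.
  have Fs0 : 0 < (F s)%:R :> rat by rewrite ltr0n F0.
  have := tangent p Fs0 Mr0.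
  move=> T.
  apply: (@le_trans _ _ ((F s * w s)%N%:R * (g * ((F s ^ n)%N%:R)^-1))); last first.
    by apply: ler_wpM2r; [rewrite mulr_ge0 // ?invr_ge0 // ltW|rewrite ler_nat FB].
  rewrite natrM natrX np exprS invfM.
  have -> : (F s)%:R * (w s)%:R * (g * (((F s)%:R)^-1 * ((F s)%:R ^+ p)^-1)) =
     g * (w s)%:R * ((F s)%:R ^+ p)^-1 :> rat.
    by field; rewrite expf_neq0 ?andbT gt_eqF.
  rewrite -mulrA; apply: ler_wpM2l; first by rewrite mulr_ge0 // ltW.
  exact: T.
apply: le_trans step1.
have E : \sum_(s in G) g * (w s)%:R * (Mr ^+ p)^-1 * (p.+1%:R - p%:R * (F s)%:R / Mr)
  = g * (Mr ^+ p)^-1 * (p.+1%:R * Wr - p%:R / Mr * (\sum_(s in G) w s * F s)%N%:R).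
  rewrite /Wr !natr_sum mulr_sumr mulr_sumr -sumrB mulr_sumr.
  apply: eq_bigr => s _; rewrite natrM; field.
  by rewrite expf_neq0 ?gt_eqF.
rewrite E.
have WF' : (\sum_(s in G) w s * F s)%N%:R <= Mr * Wr by rewrite -natrM ler_nat.
have GW' : #|G|%:R <= Wr by rewrite ler_nat.
have Mp0 : 0 < Mr ^+ p by rewrite exprn_gt0.
rewrite natrX -/Mr.
have H1 : Wr <= p.+1%:R * Wr - p%:R / Mr * (\sum_(s in G) w s * F s)%N%:R.
  have : p%:R / Mr * (\sum_(s in G) w s * F s)%N%:R <= p%:R / Mr * (Mr * Wr).
    by apply: ler_wpM2l => //; rewrite divr_ge0 // ltW.
  rewrite mulrA divfK ?gt_eqF // -natr1.
  lra.
apply: (@le_trans _ _ (g * (Mr ^+ p)^-1 * Wr)); last first.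
  by rewrite ler_pM2l // mulr_gt0 // invr_gt0.
rewrite mulrAC -[X in X <= _]mul1r ler_pM2r ?invr_gt0 //.
apply: (@le_trans _ _ (g * #|G|%:R)).
  by rewrite /g mulVf // pnatr_eq0 -lt0n.
by rewrite ler_pM2l.
Qed.

Unset Implicit Arguments.
Theorem lemma5p1 (n k : nat) (hn : (1 <= n)%N) (hnk : (n <= k)%N)
  (x y : {set {set 'I_n}}) :
  partition x [set: 'I_n] -> partition y [set: 'I_n] ->
  forall u : vec n k, vpart u = x ->
  ((((n + 1) ^ (n - 1))%N%:R : rat)^-1 <= BKbar_from u y).
Proof.
move=> _ hy u _.
have hn0 : (0 < n)%N := hn.
have c0A' := c0A hn0 u.
set j := (#|y| - #|Aset u|)%N.
have mn : (#|y| <= n)%N.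
  apply: (@leq_trans (\sum_(B in y) #|B|)); last first.
    by rewrite -(card_partition hy) cardsT card_ord.
  rewrite -sum1_card; apply: leq_sum => B By.
  by rewrite card_gt0; exact: (partition_neq0 hy By).
have bn : (#|Aset u| <= n)%N.
  by apply: (leq_trans (leq_imset_card _ _)); rewrite card_ord.
have hjC : (j <= #|~: Aset u|)%N.
  have := cardsC (Aset u); rewrite card_ord => E.
  rewrite /j; move: E mn bn hnk; move: (#|y|) (#|Aset u|) (#|~: Aset u|) => a b c.
  clear; lia.
rewrite /BKbar_from /BK.
rewrite (exchange_big_dep (mem (stab u))) /=; last by move=> v s _ /andP[].
have -> : \sum_(s in stab u)
     \sum_(v | (vpart v == y) && ((s \in stab u) && [forall i, s (v i) == v i]))
        (((#|stab u|%:R : rat))^-1 * (((nfix s) ^ n)%N%:R)^-1) =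
   \sum_(s in stab u)
     (#|[set v : vec n k | (vpart v == y) && [forall i, s (v i) == v i]]|)%:R *
        (((#|stab u|%:R : rat))^-1 * (((nfix s) ^ n)%N%:R)^-1).
  apply: eq_bigr => s Gs.
  rewrite (eq_bigl (fun v => v \in [set v : vec n k | (vpart v == y) && [forall i, s (v i) == v i]])).
    by rewrite sumr_const mulr_natl.
  by move=> v; rewrite inE Gs.
apply: (@final _ (stab u) (fun s => #|Tfix u j s|) (@nfix k)
   (fun s => #|[set v : vec n k | (vpart v == y) && [forall i, s (v i) == v i]]|) n (n + 1)).
- by apply/card_gt0P; exists 1%g; exact: group1 (stab_group u).
- exact: hn0.
- by rewrite addn1.
- move=> s Gs; apply/card_gt0P; exists (c0 hn0 u); rewrite inE.
  by rewrite (stab_fixA Gs c0A').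
- move=> s Gs; exact: (F1 hn0 hy Gs).
- exact: (F2 hjC).
- apply: (leq_trans (F3 u j)); rewrite leq_mul2r; apply/orP; right.
  rewrite /j; move: mn bn; move: (#|y|) (#|Aset u|) => a b; clear; lia.
Qed.
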